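(* Let $S$ be a formula. Then $\mathbb{C}[D]\otimes S$, with the extended products and the operator $D$, satisfies the half Jacobi identity (i.e. is a VLA-SS) if and only if for all homogeneous $u,v,w\in S$ and all $m,n\in\mathbb{N}$ one has, in $\mathbb{C}[D]\otimes S$, $$u_m(v_nw)-\varepsilon_{u,v}v_n(u_mw)=\sum_{i\ge0}\binom{m}{i}(u_iv)_{m+n-i}w .$$
   Context: All spaces over $\mathbb{C}$; $\mathbb{N}=\{0,1,2,\dots\}$; $\varepsilon_{u,v}=(-1)^{|u||v|}$. A formula is a $\mathbb{Z}_2$-graded space $S$ with parity-preserving linear maps $F_n:S\otimes S\to\mathbb{C}[D]\otimes S$ ($n\in\mathbb{N}$; $\mathbb{C}[D]$ even) with $F_n(u,v)=0$ for $n$ large; write $u_nv=F_n(u,v)$, identify $S=1\otimes S$, $D(D^k\otimes u)=D^{k+1}\otimes u$. The products extend uniquely to bilinear products $A_nB$ ($n\in\mathbb{N}$) on $\mathbb{C}[D]\otimes S$ with $(DA)_nB=-nA_{n-1}B$ and $D(A_nB)=(DA)_nB+A_n(DB)$; explicitly $\sum_{n\ge0}(P(D)u)_n(Q(D)v)z^{-n-1}=P(\frac{d}{dz})Q(D-\frac{d}{dz})\sum_{n\ge0}(u_nv)z^{-n-1}$. A VLA-SS is a $\mathbb{Z}_2$-graded space $U$ with an even operator $D$ and bilinear products $u_nv$ ($n\in\mathbb{N}$) such that for homogeneous $u,v,w$: $u_nv=0$ for $n$ large; $|u_nv|=|u|+|v|$; $(Du)_nv=-nu_{n-1}v$ and $D(u_nv)=(Du)_nv+u_n(Dv)$;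 and the half Jacobi identity: for all $k,m,n\in\mathbb{N}$, $\sum_{i\ge0}(-1)^i\binom{k}{i}(u_{m+k-i}(v_{n+i}w)-\varepsilon_{u,v}(-1)^kv_{n+k-i}(u_{m+i}w))=\sum_{i\ge0}\binom{m}{i}(u_{k+i}v)_{m+n-i}w$. *)

(* Defs.v *)
From HB Require Import structures.
From mathcomp Require Import all_boot all_order all_algebra.
Set Implicit Arguments.
Unset Strict Implicit.
Unset Printing Implicit Defensive.
Import GRing.Theory.
Local Open Scope ring_scope.

Section CDS.
Variables (K : fieldType) (S : lmodType K).

(* An element of C[D] (x) S is represented by a sequence s : seq S,
   standing for  \sum_j D^j (x) s`_j .  Two representations denote the same
   element iff all their coefficients agree (trailing zeros are irrelevant). *)
Definition cdeq (s t : seq S) : Prop := forall j : nat, nth 0 s j = nth 0 t j.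

Definition cdadd (s t : seq S) : seq S :=
  mkseq (fun j => nth 0 s j + nth 0 t j) (maxn (size s) (size t)).
Definition cdscale (a : K) (s : seq S) : seq S := map (fun x => a *: x) s.
Definition cdDn (e : nat) (s : seq S) : seq S := ncons e 0 s.

Definition cdsum (n : nat) (f : nat -> seq S) : seq S :=
  \big[cdadd/[::]]_(i < n) f i.

(* A formula: Z2-graded space S (parity components par false / par true,
   S = S_0 (+) S_1) with parity-preserving bilinear maps
   F_n : S (x) S -> C[D] (x) S, vanishing for n large. *)
Record formula := Formula {
  par : bool -> pred S;
  par_lin : forall b (a : K) (x y : S), par b x -> par b y -> par b (a *: x + y);
  par_0 : forall b, par b 0;
  par_span : forall x : S, exists x0 x1, [/\ par false x0, par true x1 & x = x0 + x1];
  par_inter : forall x : S, par false x -> par true x -> x = 0;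
  fprod : nat -> S -> S -> seq S;
  fprod_linl : forall n (a : K) (u u' v : S) j,
      nth 0 (fprod n (a *: u + u') v) j = a *: nth 0 (fprod n u v) j + nth 0 (fprod n u' v) j;
  fprod_linr : forall n (a : K) (u v v' : S) j,
      nth 0 (fprod n u (a *: v + v')) j = a *: nth 0 (fprod n u v) j + nth 0 (fprod n u v') j;
  fprod_parity : forall (a b : bool) (u v : S) n j,
      par a u -> par b v -> par (a (+) b) (nth 0 (fprod n u v) j);
  fprod_vanish : forall u v : S, exists N : nat,
      forall n j, (N <= n)%N -> nth 0 (fprod n u v) j = 0
}.

(* The extended products A_n B on C[D] (x) S.  They are determined by
   bilinearity from the closed form (obtained from
   (DA)_n B = -n A_{n-1} B,  A_n (DB) = D(A_n B) + n A_{n-1} B,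
   equivalently from the P(d/dz) Q(D - d/dz) formula):
     (D^k u)_n (D^l v)
       = (-1)^k n^_k \sum_{i<=l} C(l,i) (n-k)^_i D^{l-i} (u_{n-k-i} v),
   where x^_k is the falling factorial (zero when k > x). *)
Definition ext_prod (F : formula) (n : nat) (A B : seq S) : seq S :=
  cdsum (size A) (fun k =>
  cdsum (size B) (fun l =>
  cdsum l.+1 (fun i =>
    cdscale ((-1) ^+ k * ((n ^_ k)%N)%:R * ('C(l, i))%:R * (((n - k) ^_ i)%N)%:R)
      (cdDn (l - i) (fprod F (n - k - i) (nth 0 A k) (nth 0 B l)))))).

Definition cd_hom (F : formula) (b : bool) (A : seq S) : Prop :=
  forall j, par F b (nth 0 A j).

Definition eps (a b : bool) : K := (-1) ^+ (a && b).

Definition ext_half_jacobi (F : formula) : Prop :=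
  forall (a b c : bool) (A B C : seq S),
    cd_hom F a A -> cd_hom F b B -> cd_hom F c C ->
    forall k m n : nat,
      cdeq
        (cdsum k.+1 (fun i =>
           cdscale ((-1) ^+ i * ('C(k, i))%:R)
             (cdadd (ext_prod F (m + k - i) A (ext_prod F (n + i) B C))
                    (cdscale (- (eps a b * (-1) ^+ k))
                       (ext_prod F (n + k - i) B (ext_prod F (m + i) A C))))))
        (cdsum m.+1 (fun i =>
           cdscale ('C(m, i))%:R
             (ext_prod F (m + n - i) (ext_prod F (k + i) A B) C))).

(* The condition of Proposition 7.7 on homogeneous u, v, w in S
   (computed in C[D] (x) S, S embedded as degree-0 elements [:: u]). *)
Definition formula_jacobi_cond (F : formula) : Prop :=
  forall (a b c : bool) (u v w : S),
    par F a u -> par F b v -> par F c w ->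
    forall m n : nat,
      cdeq
        (cdadd (ext_prod F m [:: u] (ext_prod F n [:: v] [:: w]))
               (cdscale (- eps a b) (ext_prod F n [:: v] (ext_prod F m [:: u] [:: w]))))
        (cdsum m.+1 (fun i =>
           cdscale ('C(m, i))%:R
             (ext_prod F (m + n - i) (ext_prod F i [:: u] [:: v]) [:: w]))).

End CDS.

(* Main.v *)
From Pilot Require Import Defs.
From mathcomp Require Import all_boot all_order all_algebra.
From mathcomp Require Import zify ring.
Import Pilot.Defs.
Set Implicit Arguments.
Unset Strict Implicit.
Unset Printing Implicit Defensive.
Import GRing.Theory.
Local Open Scope ring_scope.

Section Main.
Variables (K : fieldType) (S : lmodType K) (F : formula S).

Lemma nth_cdadd (s t : seq S) j : nth 0 (cdadd s t) j = nth 0 s j + nth 0 t j.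
Proof.
rewrite /cdadd; case: (ltnP j (maxn (size s) (size t))) => h.
  by rewrite nth_mkseq.
rewrite nth_default ?size_mkseq //.
move: h; rewrite geq_max => /andP[h1 h2].
by rewrite !nth_default // addr0.
Qed.

Lemma nth_cdscale a (s : seq S) j : nth 0 (cdscale a s) j = a *: nth 0 s j.
Proof.
rewrite /cdscale; case: (ltnP j (size s)) => h.
  by rewrite (nth_map 0).
by rewrite !nth_default ?size_map // scaler0.
Qed.

Lemma nth_cdDn e (s : seq S) j :
  nth 0 (cdDn e s) j = if (j < e)%N then 0 else nth 0 s (j - e).
Proof. by rewrite /cdDn nth_ncons. Qed.

Lemma nth_cdsum n (f : nat -> seq S) j :
  nth 0 (cdsum n f) j = \sum_(i < n) nth 0 (f i) j.
Proof.
rewrite /cdsum; apply: (big_morph (fun s => nth 0 s j)).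
  by move=> x y; rewrite nth_cdadd.
by rewrite nth_nil.
Qed.

Lemma fprod0l n (v : S) j : nth 0 (fprod F n 0 v) j = 0.
Proof.
have := fprod_linl F n 1 0 0 v j.
rewrite scaler0 addr0 scale1r => h.
by move: h; rewrite -{1}[nth 0 _ j]addr0 => /addrI <-.
Qed.

Lemma fprod0r n (u : S) j : nth 0 (fprod F n u 0) j = 0.
Proof.
have := fprod_linr F n 1 u 0 0 j.
rewrite scaler0 addr0 scale1r => h.
by move: h; rewrite -{1}[nth 0 _ j]addr0 => /addrI <-.
Qed.

Definition cc n k l i : K :=
  (-1) ^+ k * ((n ^_ k)%N)%:R * ('C(l, i))%:R * (((n - k) ^_ i)%N)%:R.

Definition T n k l (x y : S) j : S :=
  \sum_(i < l.+1) cc n k l i *: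
     (if (j < l - i)%N then 0 else nth 0 (fprod F (n - k - i) x y) (j - (l - i))).

Lemma T0l n k l y j : T n k l 0 y j = 0.
Proof. by apply: big1 => i _; case: ifP; rewrite ?fprod0l scaler0. Qed.

Lemma T0r n k l x j : T n k l x 0 j = 0.
Proof. by apply: big1 => i _; case: ifP; rewrite ?fprod0r scaler0. Qed.

Lemma TDl n k l x x' y j : T n k l (x + x') y j = T n k l x y j + T n k l x' y j.
Proof.
rewrite /T -big_split; apply: eq_bigr => i _ /=.
case: ifP => _; first by rewrite scaler0 addr0.
by rewrite -[x in x + x']scale1r fprod_linl scale1r scalerDr.
Qed.

Lemma TZl n k l a x y j : T n k l (a *: x) y j = a *: T n k l x y j.
Proof.
rewrite /T scaler_sumr; apply: eq_bigr => i _ /=.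
case: ifP => _; first by rewrite !scaler0.
by rewrite -[a *: x]addr0 fprod_linl fprod0l addr0 !scalerA mulrC.
Qed.

Lemma TDr n k l x y y' j : T n k l x (y + y') j = T n k l x y j + T n k l x y' j.
Proof.
rewrite /T -big_split; apply: eq_bigr => i _ /=.
case: ifP => _; first by rewrite scaler0 addr0.
by rewrite -[y in y + y']scale1r fprod_linr scale1r scalerDr.
Qed.

Lemma TZr n k l a x y j : T n k l x (a *: y) j = a *: T n k l x y j.
Proof.
rewrite /T scaler_sumr; apply: eq_bigr => i _ /=.
case: ifP => _; first by rewrite !scaler0.
by rewrite -[a *: y]addr0 fprod_linr fprod0r addr0 !scalerA mulrC.
Qed.

Notation ep := (ext_prod F).

Lemma ep_ext n (A B : seq S) N M j :
  (size A <= N)%N -> (size B <= M)%N ->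
  nth 0 (ep n A B) j =
  \sum_(k < N) \sum_(l < M) T n k l (nth 0 A k) (nth 0 B l) j.
Proof.
move=> hA hB; rewrite /ext_prod nth_cdsum.
transitivity (\sum_(k < size A) \sum_(l < M) T n k l (nth 0 A k) (nth 0 B l) j); last first.
  rewrite (big_ord_widen N (fun k => \sum_(l < M) T n k l (nth 0 A k) (nth 0 B l) j) hA).
  rewrite [LHS]big_mkcond; apply: eq_bigr => k _ /=.
  case: ifP => hk //.
  rewrite big1 // => l _; rewrite nth_default ?T0l //.
  by rewrite leqNgt hk.
apply: eq_bigr => k _; rewrite nth_cdsum.
transitivity (\sum_(l < size B) T n k l (nth 0 A k) (nth 0 B l) j); last first.
  rewrite (big_ord_widen M (fun l => T n k l (nth 0 A k) (nth 0 B l) j) hB).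
  rewrite [LHS]big_mkcond; apply: eq_bigr => l _ /=.
  case: ifP => hl //.
  by rewrite (@nth_default _ 0 B l) ?T0r // leqNgt hl.
apply: eq_bigr => l _; rewrite nth_cdsum /T; apply: eq_bigr => i _.
by rewrite nth_cdscale nth_cdDn.
Qed.


Lemma ffact_add n k m : (n ^_ k * (n - k) ^_ m = n ^_ (k + m))%N.
Proof.
elim: k n => [|k IH] n; first by rewrite mul1n subn0.
rewrite ffactnS addSn ffactnS -IH -mulnA.
by have -> : (n - k.+1 = n.-1 - k)%N by lia.
Qed.

Lemma T_shift_k n k l x y j :
  T n k.+1 l x y j = - (n%:R) *: T n.-1 k l x y j.
Proof.
case: n => [|n].
  rewrite oppr0 scale0r; apply: big1 => i _.
  by rewrite /cc ffact0n /= mulr0 mul0r mul0r scale0r.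
rewrite /T scaler_sumr; apply: eq_bigr => i _ /=.
rewrite subSS scalerA; congr (_ *: _).
rewrite /cc ffactSS subSS exprS natrM; ring.
Qed.

Lemma T_shift_l n k l x y j :
  T n k l.+1 x y j = (if j is j'.+1 then T n k l x y j' else 0) + n%:R *: T n.-1 k l x y j.
Proof.
pose H j p d := if (j < d)%N then 0 else nth 0 (fprod F p x y) (j - d).
have eT : forall n k l j, T n k l x y j = \sum_(i < l.+1) cc n k l i *: H j (n - k - i)%N (l - i)%N.
  by [].
pose c2 i : K := (-1) ^+ k * ('C(l, i))%:R * ((n ^_ (k + i.+1))%N)%:R.
have ecc : forall i, cc n k l.+1 i.+1 = cc n k l i.+1 + c2 i.
  move=> i; rewrite /cc /c2 binS natrD -(ffact_add n k i.+1) natrM; ring.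
rewrite !eT big_ord_recl.
under eq_bigr do rewrite /bump /= ecc scalerDl.
rewrite big_split /= addrA; congr (_ + _).
  case: j => [|j].
    rewrite /H /= scaler0 add0r; apply: big1 => i _; rewrite /bump /= ?add1n subSS.
    case: (ltnP i l) => hi.
      by rewrite subn_gt0 hi scaler0.
    by rewrite /cc bin_small ?ltnS // mulr0 mul0r scale0r.
  rewrite eT.
  have -> : cc n k l.+1 0 = cc n k l 0 by rewrite /cc !bin0.
  pose f i := cc n k l i *: H j.+1 (n - k - i)%N (l.+1 - i)%N.
  transitivity (\sum_(i < l.+2) f i).
    rewrite [RHS]big_ord_recl; congr (_ + _); apply: eq_bigr => i _.
  rewrite big_ord_recr /= {2}/f /cc bin_small // mulr0 mul0r scale0r addr0.
  apply: eq_bigr => i _; rewrite /f; congr (_ *: _).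
  have hi : (i <= l)%N by rewrite -ltnS.
  by rewrite /H subSn // ltnS subSS.
rewrite scaler_sumr; apply: eq_bigr => i _ /=.
rewrite scalerA; congr (_ *: _).
  have e : (n ^_ (k + i.+1) = n * (n.-1 ^_ k * (n.-1 - k) ^_ i))%N.
    by rewrite ffact_add addnS ffactnS.
  rewrite /c2 /cc e !natrM; ring.
have -> : (n - k - i.+1 = n.-1 - k - i)%N by lia.
by rewrite subSS.
Qed.


Lemma ep_eql n (A A' B : seq S) : cdeq A A' -> cdeq (ep n A B) (ep n A' B).
Proof.
move=> h j.
rewrite (@ep_ext n A B (size A + size A') (size B)) ?leq_addr //.
rewrite (@ep_ext n A' B (size A + size A') (size B)) ?leq_addl //.
by apply: eq_bigr => k _; rewrite h.
Qed.

Lemma ep_eqr n (A B B' : seq S) : cdeq B B' -> cdeq (ep n A B) (ep n A B').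
Proof.
move=> h j.
rewrite (@ep_ext n A B (size A) (size B + size B')) ?leq_addr //.
rewrite (@ep_ext n A B' (size A) (size B + size B')) ?leq_addl //.
by apply: eq_bigr => k _; apply: eq_bigr => l _; rewrite h.
Qed.

Lemma size_cdadd (A A' : seq S) : size (cdadd A A') = maxn (size A) (size A').
Proof. by rewrite size_mkseq. Qed.

Lemma ep_addl n (A A' B : seq S) j :
  nth 0 (ep n (cdadd A A') B) j = nth 0 (ep n A B) j + nth 0 (ep n A' B) j.
Proof.
rewrite (@ep_ext n _ B (size A + size A') (size B)) ?size_cdadd ?geq_max ?leq_addr ?leq_addl //.
rewrite (@ep_ext n A B (size A + size A') (size B)) ?leq_addr //.
rewrite (@ep_ext n A' B (size A + size A') (size B)) ?leq_addl //.
rewrite -big_split; apply: eq_bigr => k _; rewrite -big_split; apply: eq_bigr => l _.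
by rewrite nth_cdadd TDl.
Qed.

Lemma ep_addr n (A B B' : seq S) j :
  nth 0 (ep n A (cdadd B B')) j = nth 0 (ep n A B) j + nth 0 (ep n A B') j.
Proof.
rewrite (@ep_ext n A _ (size A) (size B + size B')) ?size_cdadd ?geq_max ?leq_addr ?leq_addl //.
rewrite (@ep_ext n A B (size A) (size B + size B')) ?leq_addr //.
rewrite (@ep_ext n A B' (size A) (size B + size B')) ?leq_addl //.
rewrite -big_split; apply: eq_bigr => k _; rewrite -big_split; apply: eq_bigr => l _.
by rewrite nth_cdadd TDr.
Qed.

Lemma ep_scalel n a (A B : seq S) j :
  nth 0 (ep n (cdscale a A) B) j = a *: nth 0 (ep n A B) j.
Proof.
rewrite (@ep_ext n _ B (size A) (size B)) ?size_map //.
rewrite (@ep_ext n A B (size A) (size B)) //.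
rewrite scaler_sumr; apply: eq_bigr => k _; rewrite scaler_sumr; apply: eq_bigr => l _.
by rewrite nth_cdscale TZl.
Qed.

Lemma ep_scaler n a (A B : seq S) j :
  nth 0 (ep n A (cdscale a B)) j = a *: nth 0 (ep n A B) j.
Proof.
rewrite (@ep_ext n A _ (size A) (size B)) ?size_map //.
rewrite (@ep_ext n A B (size A) (size B)) //.
rewrite scaler_sumr; apply: eq_bigr => k _; rewrite scaler_sumr; apply: eq_bigr => l _.
by rewrite nth_cdscale TZr.
Qed.

Lemma ep_Dl n (A B : seq S) j :
  nth 0 (ep n (cdDn 1 A) B) j = - (n%:R) *: nth 0 (ep n.-1 A B) j.
Proof.
rewrite (@ep_ext n _ B (size A).+1 (size B)) //.
rewrite (@ep_ext n.-1 A B (size A) (size B)) //.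
rewrite big_ord_recl big1 ?add0r; last by move=> l _; rewrite T0l.
rewrite scaler_sumr; apply: eq_bigr => k _; rewrite scaler_sumr; apply: eq_bigr => l _.
by rewrite T_shift_k.
Qed.

Lemma ep_Dr n (A B : seq S) j :
  nth 0 (ep n A (cdDn 1 B)) j =
  nth 0 (cdDn 1 (ep n A B)) j + n%:R *: nth 0 (ep n.-1 A B) j.
Proof.
rewrite nth_cdDn.
rewrite (@ep_ext n A _ (size A) (size B).+1) //.
rewrite (@ep_ext n.-1 A B (size A) (size B)) //.
case: j => [|j] /=.
  rewrite add0r scaler_sumr; apply: eq_bigr => k _.
  rewrite big_ord_recl T0r add0r scaler_sumr; apply: eq_bigr => l _.
  by rewrite T_shift_l add0r.
rewrite subn1 /= (@ep_ext n A B (size A) (size B)) //.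
rewrite scaler_sumr -big_split; apply: eq_bigr => k _.
rewrite big_ord_recl T0r add0r scaler_sumr -big_split; apply: eq_bigr => l _.
by rewrite T_shift_l.
Qed.


Definition Rh (h : nat -> nat -> S) m n :=
  \sum_(i < m.+1) ('C(m, i))%:R *: h i (m + n - i)%N.

Lemma SumA (h : nat -> nat -> S) m n :
  \sum_(i < m.+1) ('C(m, i))%:R *: ((i%:R) *: h i.-1 (m + n - i)%N) =
  if m is m'.+1 then m%:R *: Rh h m' n else 0.
Proof.
case: m => [|m].
  by rewrite big_ord1 /= scale0r scaler0.
rewrite big_ord_recl /= scale0r scaler0 add0r /Rh scaler_sumr.
apply: eq_bigr => i _; rewrite /bump /= add1n scalerA scalerA -!natrM.
by rewrite addSn subSS add0n mulnC (mul_bin_diag m.+1 i).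
Qed.

Lemma SumP (h : nat -> nat -> S) m n :
  \sum_(i < m.+1) ('C(m, i))%:R *: ((m + n - i)%:R *: h i (m + n - i).-1) =
  (if m is m'.+1 then m%:R *: Rh h m' n else 0) +
  (if n is n'.+1 then n%:R *: Rh h m n' else 0).
Proof.
transitivity (\sum_(i < m.+1) (m * 'C(m.-1, i))%N%:R *: h i (m + n - i).-1 +
              \sum_(i < m.+1) (n * 'C(m, i))%N%:R *: h i (m + n - i).-1).
  rewrite -big_split; apply: eq_bigr => i _ /=.
  rewrite scalerA -natrM -scalerDl -natrD mul_bin_down; congr ((_ %:R) *: _).
  have hi : (i <= m)%N by rewrite -ltnS.
  have -> : (m + n - i = n + (m - i))%N by lia.
  by rewrite mulnDr addnC mulnC [X in (_ + X)%N]mulnC.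
congr (_ + _).
  case: m => [|m]; first by apply: big1 => i _; rewrite mul0n scale0r.
  rewrite big_ord_recr /= bin_small // (muln0 m.+1) scale0r addr0 /Rh scaler_sumr.
  apply: eq_bigr => i _; rewrite scalerA -natrM.
  have hi : (i <= m)%N by rewrite -ltnS.
  by have -> : ((m.+1 + n - i).-1 = m + n - i)%N by lia.
case: n => [|n]; first by apply: big1 => i _; rewrite mul0n scale0r.
rewrite /Rh scaler_sumr; apply: eq_bigr => i _; rewrite scalerA -natrM mulnC.
have hi : (i <= m)%N by rewrite -ltnS.
by have -> : ((m + n.+1 - i).-1 = m + n - i)%N by lia.
Qed.

Definition J0 (e : K) (A B C : seq S) := forall m n j,
  nth 0 (ep m A (ep n B C)) j - e *: nth 0 (ep n B (ep m A C)) j =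
  \sum_(i < m.+1) ('C(m, i))%:R *: nth 0 (ep (m + n - i) (ep i A B) C) j.

Lemma J0_eqA e (A A' B C : seq S) : cdeq A A' -> J0 e A B C -> J0 e A' B C.
Proof.
move=> h H m n j.
rewrite -(ep_eql m (ep n B C) h j) -(ep_eqr n B (ep_eql m C h) j) H.
by apply: eq_bigr => i _; rewrite (ep_eql _ C (ep_eql i B h) j).
Qed.

Lemma J0_eqB e (A B B' C : seq S) : cdeq B B' -> J0 e A B C -> J0 e A B' C.
Proof.
move=> h H m n j.
rewrite -(ep_eqr m A (ep_eql n C h) j) -(ep_eql n (ep m A C) h j) H.
by apply: eq_bigr => i _; rewrite (ep_eql _ C (ep_eqr i A h) j).
Qed.

Lemma J0_eqC e (A B C C' : seq S) : cdeq C C' -> J0 e A B C -> J0 e A B C'.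
Proof.
move=> h H m n j.
rewrite -(ep_eqr m A (ep_eqr n B h) j) -(ep_eqr n B (ep_eqr m A h) j) H.
by apply: eq_bigr => i _; rewrite (ep_eqr _ _ h j).
Qed.

Lemma rearr2 e (a b a' b' : S) : (a + b) - e *: (a' + b') = (a - e *: a') + (b - e *: b').
Proof. by rewrite scalerDr opprD addrACA. Qed.

Lemma J0_addA e (A A' B C : seq S) : J0 e A B C -> J0 e A' B C -> J0 e (cdadd A A') B C.
Proof.
move=> H H' m n j.
have hc : forall p (X : seq S), cdeq (ep p (cdadd A A') X) (cdadd (ep p A X) (ep p A' X)).
  by move=> p X j'; rewrite nth_cdadd ep_addl.
rewrite ep_addl (ep_eqr n B (hc m C) j) ep_addr rearr2 H H' -big_split.
apply: eq_bigr => i _; rewrite (ep_eql _ C (hc i B) j) ep_addl scalerDr //.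
Qed.

Lemma J0_addB e (A B B' C : seq S) : J0 e A B C -> J0 e A B' C -> J0 e A (cdadd B B') C.
Proof.
move=> H H' m n j.
have hc : cdeq (ep n (cdadd B B') C) (cdadd (ep n B C) (ep n B' C)).
  by move=> j'; rewrite nth_cdadd ep_addl.
have hc' : forall i, cdeq (ep i A (cdadd B B')) (cdadd (ep i A B) (ep i A B')).
  by move=> i j'; rewrite nth_cdadd ep_addr.
rewrite (ep_eqr m A hc j) ep_addr ep_addl rearr2 H H' -big_split.
apply: eq_bigr => i _; rewrite (ep_eql _ C (hc' i) j) ep_addl scalerDr //.
Qed.

Lemma J0_addC e (A B C C' : seq S) : J0 e A B C -> J0 e A B C' -> J0 e A B (cdadd C C').
Proof.
move=> H H' m n j.
have hc : forall p (X : seq S), cdeq (ep p X (cdadd C C')) (cdadd (ep p X C) (ep p X C')).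
  by move=> p X j'; rewrite nth_cdadd ep_addr.
rewrite (ep_eqr m A (hc n B) j) (ep_eqr n B (hc m A) j) !ep_addr rearr2 H H' -big_split.
apply: eq_bigr => i _; rewrite ep_addr scalerDr //.
Qed.


Lemma J0_DA e (A B C : seq S) : J0 e A B C -> J0 e (cdDn 1 A) B C.
Proof.
move=> H m n j.
have hc : forall p X, cdeq (ep p (cdDn 1 A) X) (cdscale (-(p%:R)) (ep p.-1 A X)).
  by move=> p X j'; rewrite nth_cdscale ep_Dl.
rewrite ep_Dl (ep_eqr n B (hc m C) j) ep_scaler.
pose h r p := nth 0 (ep p (ep r A B) C) j.
rewrite (eq_bigr (fun i : 'I_m.+1 => - (('C(m, i))%:R *: ((i%:R) *: h i.-1 (m + n - i)%N)))); last first.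
  by move=> i _; rewrite (ep_eql _ C (hc i B) j) ep_scalel scaleNr scalerN.
rewrite sumrN SumA.
case: m H hc => [|m] H hc; first by rewrite oppr0 !scale0r scaler0 subr0 oppr0.
by rewrite scalerA mulrC -scalerA -scalerBr H scaleNr.
Qed.

Lemma J0_DB e (A B C : seq S) : J0 e A B C -> J0 e A (cdDn 1 B) C.
Proof.
move=> H m n j.
have hc : forall p X, cdeq (ep p (cdDn 1 B) X) (cdscale (-(p%:R)) (ep p.-1 B X)).
  by move=> p X j'; rewrite nth_cdscale ep_Dl.
have hc2 : forall i, cdeq (ep i A (cdDn 1 B))
    (cdadd (cdDn 1 (ep i A B)) (cdscale i%:R (ep i.-1 A B))).
  by move=> i j'; rewrite nth_cdadd nth_cdscale ep_Dr.
rewrite (ep_eqr m A (hc n C) j) ep_scaler ep_Dl.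
pose h r p := nth 0 (ep p (ep r A B) C) j.
rewrite (eq_bigr (fun i : 'I_m.+1 => - (('C(m, i))%:R *: ((m + n - i)%:R *: h i (m + n - i).-1))
     + ('C(m, i))%:R *: ((i%:R) *: h i.-1 (m + n - i)%N))); last first.
  move=> i _; rewrite (ep_eql _ C (hc2 i) j) ep_addl ep_Dl ep_scalel.
  by rewrite scalerDr scaleNr scalerN.
rewrite big_split /= sumrN SumP SumA opprD addrAC addNr add0r.
case: n H hc => [|n] H hc; first by rewrite oppr0 !scale0r scaler0 subr0 oppr0.
by rewrite scalerA mulrC -scalerA -scalerBr H scaleNr.
Qed.

Lemma rearr3 e (a b c a' b' c' : S) :
  (a + b + c) - e *: (a' + c' + b') = (a - e *: a') + (b - e *: b') + (c - e *: c').
Proof. by rewrite (addrAC a') rearr2 rearr2. Qed.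

Lemma J0_DC e (A B C : seq S) : J0 e A B C -> J0 e A B (cdDn 1 C).
Proof.
move=> H m n j.
have hc : forall p X, cdeq (ep p X (cdDn 1 C))
    (cdadd (cdDn 1 (ep p X C)) (cdscale p%:R (ep p.-1 X C))).
  by move=> p X j'; rewrite nth_cdadd nth_cdscale ep_Dr.
rewrite (ep_eqr m A (hc n B) j) (ep_eqr n B (hc m A) j) !ep_addr !ep_Dr !ep_scaler rearr3.
pose h r p := nth 0 (ep p (ep r A B) C) j.
rewrite (eq_bigr (fun i : 'I_m.+1 => ('C(m, i))%:R *: nth 0 (cdDn 1 (ep (m + n - i) (ep i A B) C)) j
     + ('C(m, i))%:R *: ((m + n - i)%:R *: h i (m + n - i).-1))); last first.
  by move=> i _; rewrite ep_Dr scalerDr.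
rewrite big_split /= SumP [RHS]addrA; congr (_ + _ + _).
- clear h; case: j H => [|j] H /=.
    by rewrite scaler0 subr0 big1 // => i _; rewrite scaler0.
  by rewrite H.
- case: m H hc => [|m] H hc; first by rewrite !scale0r scaler0 subr0.
  by rewrite scalerA mulrC -scalerA -scalerBr H.
- case: n H hc => [|n] H hc; first by rewrite !scale0r scaler0 subr0.
  by rewrite scalerA mulrC -scalerA -scalerBr H.
Qed.


Lemma hom_ind b (Q : seq S -> Prop) :
  (forall A A', cdeq A A' -> Q A -> Q A') ->
  (forall A A', Q A -> Q A' -> Q (cdadd A A')) ->
  (forall A, Q A -> Q (cdDn 1 A)) ->
  (forall x, par F b x -> Q [:: x]) ->
  forall A, cd_hom F b A -> Q A.
Proof.
move=> Qeq Qadd QD Q1; elim => [|x A IH] hA.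
  apply: (Qeq [:: 0]); first by rewrite /cdeq => -[|j] /=; rewrite ?nth_nil.
  exact/Q1/par_0.
apply: (Qeq (cdadd [:: x] (cdDn 1 A))).
  move=> j; rewrite nth_cdadd nth_cdDn; case: j => [|j] /=.
    by rewrite addr0.
  by rewrite nth_nil add0r subn1.
apply: Qadd; first exact/Q1/(hA 0%N).
by apply/QD/IH => j; exact: (hA j.+1).
Qed.

Lemma hom1 b x : par F b x -> cd_hom F b [:: x].
Proof. by move=> hx [|j] //=; rewrite nth_nil; exact: par_0. Qed.

End Main.

Section Abs.
Variables (K : fieldType) (V : lmodType K).

Definition SL (phi : nat -> nat -> V) k m n :=
  \sum_(i < k.+1) ((-1) ^+ i * ('C(k, i))%:R) *: phi (m + k - i)%N (n + i)%N.

Definition SR (h : nat -> nat -> V) k m n :=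
  \sum_(i < m.+1) ('C(m, i))%:R *: h (k + i)%N (m + n - i)%N.

Lemma SL_rec phi k m n : SL phi k.+1 m n = SL phi k m.+1 n - SL phi k m n.+1.
Proof.
rewrite /SL big_ord_recl.
under eq_bigr do rewrite /bump /= binS natrD mulrDr scalerDl.
rewrite big_split /= addrA; congr (_ + _).
  pose g i := ((-1) ^+ i * ('C(k, i))%:R) *: phi (m.+1 + k - i)%N (n + i)%N.
  transitivity (\sum_(i < k.+2) g i).
    rewrite [RHS]big_ord_recl /g /= !bin0 addn0 subn0 addSn addnS.
    congr (_ + _); apply: eq_bigr => i _.
  rewrite big_ord_recr /= {2}/g bin_small // mulr0 scale0r addr0.
  by apply: eq_bigr.
rewrite -sumrN; apply: eq_bigr => i _.
rewrite /bump /= add1n exprS mulN1r mulNr scaleNr.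
have hi : (i <= k)%N by rewrite -ltnS.
by rewrite addnS subSS addSn addnS.
Qed.

Lemma SR_rec h k m n : SR h k.+1 m n = SR h k m.+1 n - SR h k m n.+1.
Proof.
apply/eqP; rewrite eq_sym subr_eq; apply/eqP.
rewrite /SR big_ord_recl.
under eq_bigr do rewrite /bump /= binS natrD scalerDl.
rewrite big_split /= addrA addrC; congr (_ + _).
  by apply: eq_bigr => i _; rewrite (_ : bump 0 i = i.+1) // addnS addSn subSS.
pose g i := ('C(m, i))%:R *: h (k + i)%N (m + n.+1 - i)%N.
transitivity (\sum_(i < m.+2) g i); last first.
  rewrite big_ord_recr /= {2}/g bin_small // scale0r addr0.
  by apply: eq_bigr.
rewrite [RHS]big_ord_recl /g /= !bin0 addn0 subn0 addSn addnS.
by congr (_ + _).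
Qed.

Lemma zmod4 (x y z w : V) : (x - y) + (z - w) = (x - w) - (y - z).
Proof. by rewrite opprB addrACA [RHS]addrACA (addrC (- w)). Qed.

Lemma jac_ind e (f g h : nat -> nat -> V) :
  (forall m n, f m n - e *: g n m = SR h 0 m n) ->
  forall k m n, SL f k m n - (e * (-1) ^+ k) *: SL g k n m = SR h k m n.
Proof.
move=> H; elim => [|k IH] m n.
  rewrite /SL !big_ord1 /= !bin0 !expr0 !mul1r !mulr1n !mulr1 !scale1r !addn0 !subn0.
  exact: H.
rewrite !SL_rec SR_rec -!IH exprS mulN1r mulrN scaleNr opprK scalerBr.
by rewrite zmod4.
Qed.

End Abs.

Section Final.
Variables (K : fieldType) (S : lmodType K) (F : formula S).
Notation ep := (ext_prod F).

Lemma main_fwd : ext_half_jacobi F -> formula_jacobi_cond F.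
Proof.
move=> HJ a b c u v w hu hv hw m n j.
move: (HJ a b c _ _ _ (hom1 hu) (hom1 hv) (hom1 hw) 0%N m n j).
rewrite !nth_cdsum big_ord1 /= nth_cdscale !nth_cdadd !nth_cdscale.
rewrite !bin0 !expr0 !mul1r !mulr1n !mulr1 !scale1r !addn0 !subn0 => ->.
by apply: eq_bigr => i _; rewrite !nth_cdscale.
Qed.

Lemma main_bwd : formula_jacobi_cond F -> ext_half_jacobi F.
Proof.
move=> Hc a b c A B C hA hB hC k m n j.
set e := @eps K a b.
have H1 : forall y z, par F b y -> par F c z ->
    forall A, cd_hom F a A -> J0 F e A [:: y] [:: z].
  move=> y z hy hz; apply: hom_ind.
  - by move=> X X' h; apply: J0_eqA.
  - by move=> X X'; apply: J0_addA.
  - by move=> X; apply: J0_DA.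
  move=> x hx m' n' j'.
  move: (Hc a b c x y z hx hy hz m' n' j').
  rewrite nth_cdadd nth_cdscale nth_cdsum scaleNr => ->.
  by apply: eq_bigr => i _; rewrite nth_cdscale.
have H2 : forall z, par F c z ->
    forall B, cd_hom F b B -> forall A, cd_hom F a A -> J0 F e A B [:: z].
  move=> z hz; apply: hom_ind.
  - by move=> X X' h HX Y hY; apply: J0_eqB h (HX Y hY).
  - by move=> X X' HX HX' Y hY; apply: J0_addB (HX Y hY) (HX' Y hY).
  - by move=> X HX Y hY; apply: J0_DB (HX Y hY).
  by move=> y hy; apply: H1.
have H3 : forall C, cd_hom F c C ->
    forall B, cd_hom F b B -> forall A, cd_hom F a A -> J0 F e A B C.
  apply: hom_ind.
  - by move=> X X' h HX Z hZ Y hY; apply: J0_eqC h (HX Z hZ Y hY).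
  - by move=> X X' HX HX' Z hZ Y hY; apply: J0_addC (HX Z hZ Y hY) (HX' Z hZ Y hY).
  - by move=> X HX Z hZ Y hY; apply: J0_DC (HX Z hZ Y hY).
  by move=> z hz; apply: H2.
have J := H3 C hC B hB A hA.
pose f p q := nth 0 (ep p A (ep q B C)) j.
pose g p q := nth 0 (ep p B (ep q A C)) j.
pose h r p := nth 0 (ep p (ep r A B) C) j.
rewrite !nth_cdsum.
rewrite [RHS](eq_bigr (fun i : 'I_m.+1 => ('C(m, i))%:R *: h (k + i)%N (m + n - i)%N)); last first.
  by move=> i _; rewrite nth_cdscale.
have := @jac_ind K S e f g h (fun m n => J m n j) k m n.
rewrite /SL /SR => <-.
rewrite scaler_sumr -sumrB; apply: eq_bigr => i _.
rewrite nth_cdscale nth_cdadd nth_cdscale scalerDr !scalerA mulrN scaleNr.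
by rewrite [_ * (e * _)]mulrC.
Qed.

End Final.

Theorem proposition7p7 (K : fieldType) (S : lmodType K) (F : formula S) :
  ext_half_jacobi F <-> formula_jacobi_cond F.
Proof. split; [exact: main_fwd | exact: main_bwd]. Qed.
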